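(* Let $F$ be a periodic fabric of order greater than $4$ whose side-preserving symmetry group $H_1$ is generated by side-preserving glide-reflections and is transitive on the set of all strands, and suppose $F$ is perfectly coloured by thin striping. Let $P$ be the resulting pattern, regarded as the design of a prefabric. Let $\gamma$ be a side-preserving glide-reflection symmetry of $F$ whose axis runs diagonally (at $45^\circ$ to the strands) through cell centres and whose glide is $k\delta$ for an integer $k$, where $\delta=\sqrt2$ is the length of a cell diagonal. (i) If $k$ is even and the axis passes through irredundant cells, or $k$ is odd and the axis passes through redundant cells, then the prefabric with design $P$ has a side-preserving glide-reflection with the same axis and glide. (ii) If $k$ is even and the axis passes through redundant cells, or $k$ is odd and the axis passes through irredundant cells, then the prefabric with design $P$ has a side-reversing glide-reflection with the same axis and glide.
   Context: The plane is divided into unit square cells by a square grid. A prefabric consists of vertical strands (warps, columns of cells) and horizontal strands (wefts, rows of cells), with a specification in every cell of which strand is uppermost when viewed from the obverse. Its design colours a cell dark if the warp is uppermost and pale if the weft is uppermost; any dark/pale colouring of the cells, regarded as a design, determines a prefabric. A prefabric is periodic if invariant under two linearly independent translations; its order is the period of the up/down sequence along a strand. A symmetry is an isometry of the plane preserving the grid and the prefabric, possibly composed with side reversal $\tau$ (reflection in the plane of the prefabric, interchanging which strand is uppermost in every cell); symmetries without $\tau$ are side-preserving, those with $\tau$ side-reversing. $G_1$ is the symmetry group and $H_1$ its side-preserving subgroup. A fabric is a prefabric that does not fall apart, where a prefabric falls apart if some nonempty proper subset $S$ of the strands is uppermost at every crossing of a strand of $S$ with a strand outside $S$. Thin striping colours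 warps alternately dark and pale and wefts alternately dark and pale; the pattern colours each cell with the colour of the strand uppermost there. A cell is redundant if the warp and weft crossing there have the same colour and irredundant otherwise; these form a checkerboard, and a diagonal line through cell centres passes only through cells of one class. The colouring is perfect if every symmetry in $G_1$ maps all dark strands to dark strands and all pale strands to pale strands, or interchanges the two colour classes of strands. *)

(* Defs.v *)
(* Cells of the square grid are indexed by int * int:
   cell (x, y) lies in warp (column) x and weft (row) y; its centre is the
   lattice point (x, y).  A design/prefabric is D : int * int -> bool,
   D p = true  <=> p is dark <=> the warp is uppermost at p. *)
From mathcomp Require Import all_boot all_order all_algebra.
Set Implicit Arguments. Unset Strict Implicit. Unset Printing Implicit Defensive.
Import Order.TTheory GRing.Theory Num.Theory.
Local Open Scope ring_scope.

Definition cell := (int * int)%type.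
Definition design := cell -> bool.

(* Every isometry of the plane preserving the grid maps cell centres to cell
   centres; it is p |-> A p + t with A one of the 8 signed permutation
   matrices and t an integer vector.  We encode A by [swap] (exchange the two
   coordinates first) and the signs [sx], [sy]. *)
Record gisom := GIsom { swap : bool; sx : bool; sy : bool; tx : int; ty : int }.

Fixpoint gIn (h : gisom) (l : seq gisom) : Prop :=
  match l with nil => False | h0 :: t => h0 = h \/ gIn h t end.

Definition sgn (b : bool) (z : int) : int := if b then - z else z.

Definition gapp (g : gisom) (p : cell) : cell :=
  let uv := if swap g then (p.2, p.1) else p in
  (sgn (sx g) uv.1 + tx g, sgn (sy g) uv.2 + ty g).

Definition orient_rev (g : gisom) : bool := swap g (+) sx g (+) sy g.

(* a (proper) glide-reflection: orientation reversing, with nonzero glide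
   (so that it is not an involution) *)
Definition is_glide_reflection (g : gisom) : Prop :=
  orient_rev g /\ exists p, gapp g (gapp g p) <> p.

(* (g, tau) is a symmetry of the prefabric D; tau = true means composed with
   side reversal.  If g exchanges warp and weft directions, the strand on top
   at p becomes a strand of the other direction at g p. *)
Definition is_symmetry (D : design) (g : gisom) (tau : bool) : Prop :=
  forall p, D (gapp g p) = D p (+) swap g (+) tau.

Definition in_H1 (D : design) (g : gisom) : Prop := is_symmetry D g false.

Inductive strand := Warp of int | Weft of int.

Definition strand_img (g : gisom) (s : strand) : strand :=
  match s with
  | Warp i => if swap g then Weft (sgn (sy g) i + ty g) else Warp (sgn (sx g) i + tx g)
  | Weft j => if swap g then Warp (sgn (sx g) j + tx g) else Weft (sgn (sy g) j + ty g)
  end.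

Definition periodic (D : design) : Prop :=
  exists a b c d : int, a * d - b * c != 0 /\
    (forall x y, D (x + a, y + b) = D (x, y)) /\
    (forall x y, D (x + c, y + d) = D (x, y)).

Definition strand_period (D : design) (s : strand) (p : int) : Prop :=
  match s with
  | Warp i => forall y, D (i, y + p) = D (i, y)
  | Weft j => forall x, D (x + p, j) = D (x, j)
  end.

Definition order_gt (D : design) (n : nat) : Prop :=
  forall s (p : nat), (0 < p <= n)%N -> ~ strand_period D s p%:Z.

Definition falls_apart (D : design) : Prop :=
  exists (Sw Sf : int -> bool),
    ((exists i, Sw i) \/ (exists j, Sf j)) /\
    ((exists i, ~~ Sw i) \/ (exists j, ~~ Sf j)) /\
    (forall i j, Sw i -> ~~ Sf j -> D (i, j) = true) /\
    (forall i j, Sf j -> ~~ Sw i -> D (i, j) = false).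

Definition is_fabric (D : design) : Prop := ~ falls_apart D.

(* H_1 generated by side-preserving glide-reflections (inverses of
   glide-reflections are glide-reflections, so products suffice) *)
Definition H1_gen_by_glides (D : design) : Prop :=
  forall g, in_H1 D g ->
    exists l : seq gisom,
      (forall h, gIn h l -> is_glide_reflection h /\ in_H1 D h) /\
      (forall p, gapp g p = foldr (fun h q => gapp h q) p l).

Definition H1_transitive (D : design) : Prop :=
  forall s s', exists g, in_H1 D g /\ strand_img g s = s'.

(* thin striping: cw / cf give the colours (true = dark) of warps / wefts *)
Definition thin_striping (cw cf : int -> bool) : Prop :=
  (forall i, cw (i + 1) = ~~ cw i) /\ (forall j, cf (j + 1) = ~~ cf j).

Definition strand_col (cw cf : int -> bool) (s : strand) : bool :=
  match s with Warp i => cw i | Weft j => cf j end.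

Definition perfect (D : design) (cw cf : int -> bool) : Prop :=
  forall g tau, is_symmetry D g tau ->
    (forall s, strand_col cw cf (strand_img g s) = strand_col cw cf s) \/
    (forall s, strand_col cw cf (strand_img g s) = ~~ strand_col cw cf s).

Definition pattern (D : design) (cw cf : int -> bool) : design :=
  fun p => if D p then cw p.1 else cf p.2.

Definition redundant (cw cf : int -> bool) (p : cell) : bool := cw p.1 == cf p.2.

Definition on_axis (dir : bool) (c : int) (p : cell) : bool :=
  if dir then p.2 == p.1 + c else p.1 + p.2 == c.

(* reflection in that axis followed by translation k * (1, 1) resp. k * (1, -1),
   i.e. glide of length k * delta along the axis *)
Definition diag_glide (dir : bool) (c k : int) : gisom :=
  if dir then GIsom true false false (k - c) (c + k)
  else GIsom true true true (c + k) (c - k).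

Definition axis_irredundant (cw cf : int -> bool) dir c : Prop :=
  forall p, on_axis dir c p -> ~~ redundant cw cf p.
Definition axis_redundant (cw cf : int -> bool) dir c : Prop :=
  forall p, on_axis dir c p -> redundant cw cf p.

(* Main.v *)
Require Import Defs.
From mathcomp Require Import all_boot all_order all_algebra.
From mathcomp Require Import ring.
Import Order.TTheory GRing.Theory Num.Theory.
Local Open Scope ring_scope.

Lemma alt_shift (f : int -> bool) : (forall i, f (i+1) = ~~ f i) ->
  forall a k, f (a + k) = f a (+) odd `|k|%N.
Proof.
move=> H a k.
have Hn : forall i (n : nat), f (i + n%:Z) = f i (+) odd n.
  move=> i; elim=> [|n IH]; first by rewrite addr0 addbF.
  have -> : (n.+1)%:Z = n%:Z + 1 by rewrite -addn1 PoszD.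
  by rewrite addrA H IH /= addbN.
case: k => n; first exact: Hn.
have E : f a = f ((a + Negz n) + n.+1%:Z) by rewrite NegzE addrNK.
by rewrite E Hn /= -addbA addbb addbF.
Qed.

Theorem corollary3p2 (D : design) (cw cf : int -> bool)
  (dir : bool) (c k : int) :
  is_fabric D -> periodic D -> order_gt D 4 ->
  H1_gen_by_glides D -> H1_transitive D ->
  thin_striping cw cf -> perfect D cw cf ->
  is_symmetry D (diag_glide dir c k) false ->
  ((~~ odd `|k|%N /\ axis_irredundant cw cf dir c) \/
   (odd `|k|%N /\ axis_redundant cw cf dir c) ->
     is_symmetry (pattern D cw cf) (diag_glide dir c k) false) /\
  ((~~ odd `|k|%N /\ axis_redundant cw cf dir c) \/
   (odd `|k|%N /\ axis_irredundant cw cf dir c) ->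
     is_symmetry (pattern D cw cf) (diag_glide dir c k) true).
Proof.
move=> _ _ _ _ _ [Hw Hf] _ Hs.
have Sw := alt_shift _ Hw; have Sf := alt_shift _ Hf.
have SwN : forall a, cw (a - k) = cw a (+) odd `|k|%N.
  by move=> a; rewrite Sw abszN.
have SfN : forall a, cf (a - k) = cf a (+) odd `|k|%N.
  by move=> a; rewrite Sf abszN.
have key : forall tau (r : bool),
   (forall p, on_axis dir c p -> redundant cw cf p = r) ->
   tau = (odd `|k|%N (+) r) ->
   is_symmetry (pattern D cw cf) (diag_glide dir c k) tau.
  move=> tau r Hr -> [x y].
  have Hsp := Hs (x, y).
  case: dir Hr Hs Hsp => Hr _; rewrite /pattern /gapp /diag_glide /= => ->;
   case: (D (x, y)) => /=.
  - have := Hr (x, x + c); rewrite /on_axis /redundant eqxx /= => /(_ isT) {Hr}.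
    move=> R; rewrite addrA (Sf (x + c) k); move: R.
    by case: r; destruct (cw x); destruct (cf (x + c)); destruct (odd `|k|%N) => /= //.
  - have := Hr (y - c, y); rewrite /on_axis /redundant subrK eqxx /= => /(_ isT) {Hr}.
    move=> R; have -> : y + (k - c) = (y - c) + k by ring.
    rewrite (Sw (y - c) k); move: R.
    by case: r; destruct (cw (y - c)); destruct (cf y); destruct (odd `|k|%N) => /= //.
  - have := Hr (x, c - x); rewrite /on_axis /redundant addrC subrK eqxx /= => /(_ isT) {Hr}.
    have -> : - x + (c - k) = (c - x) - k by ring.
    move=> R; rewrite (SfN (c - x)); move: R.
    by case: r; destruct (cw x); destruct (cf (c - x)); destruct (odd `|k|%N) => /= //.
  - have := Hr (c - y, y); rewrite /on_axis /redundant subrK eqxx /= => /(_ isT) {Hr}.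
    move=> R; have -> : - y + (c + k) = (c - y) + k by ring.
    rewrite (Sw (c - y) k); move: R.
    by case: r; destruct (cw (c - y)); destruct (cf y); destruct (odd `|k|%N) => /= //.
split.
- case=> [[Hk Hr] | [Hk Hr]].
  + apply: (key _ false); first by move=> p /Hr /negbTE.
    by rewrite (negbTE Hk).
  + apply: (key _ true); first by move=> p /Hr.
    by rewrite Hk.
- case=> [[Hk Hr] | [Hk Hr]].
  + apply: (key _ true); first by move=> p /Hr.
    by rewrite (negbTE Hk).
  + apply: (key _ false); first by move=> p /Hr /negbTE.
    by rewrite Hk.
Qed.
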